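(* Let $\rho_{Q^n}$ be an arbitrary normalized state on $Q^{\otimes n}$. Suppose the $i$th subsystem is measured with a two-outcome POVM $\{P(i),I-P(i)\}$, and let $\boldsymbol N_P$ be the number of first outcomes; similarly, with POVMs $\{P'(i),I-P'(i)\}$, let $\boldsymbol N_{P'}$ be the number of first outcomes. Suppose for every $i$ there is $0\le\tilde P(i)\le I$ with $P(i)\le\tilde P(i)$, $P'(i)\le\tilde P(i)$ and $\|\tilde P(i)-P(i)\|_\infty\le\delta$. Then $$\Pr\Big(\frac{\boldsymbol N_{P'}}{n}\ge e+\delta+c\Big)\le\Pr\Big(\frac{\boldsymbol N_P}{n}\ge e\Big)+\sum_{i=n(\delta+c)}^{n}\binom ni\delta^i(1-\delta)^{n-i}$$ (sum over integers $i$ with $n(\delta+c)\le i\le n$). *)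

(* Defs.v *)
From HB Require Import structures.
From mathcomp Require Import all_boot all_order all_algebra.
Set Implicit Arguments. Unset Strict Implicit. Unset Printing Implicit Defensive.
Import Order.TTheory GRing.Theory Num.Theory.
Local Open Scope ring_scope.

Section Quantum.
Variable C : numClosedFieldType.

Definition psd (I : finType) (A : I -> I -> C) : Prop :=
  forall v : I -> C, 0 <= \sum_(a : I) \sum_(b : I) (v a)^* * A a b * v b.

Definition loewner_le (d : nat) (A B : 'M[C]_d) : Prop :=
  psd (fun a b : 'I_d => B a b - A a b).

Definition effect (d : nat) (A : 'M[C]_d) : Prop :=
  loewner_le 0 A /\ loewner_le A 1%:M.

Definition vnorm (d : nat) (v : 'I_d -> C) : C :=
  sqrtC (\sum_(a < d) `|v a| ^+ 2).

Definition opnorm_le (d : nat) (A : 'M[C]_d) (t : C) : Prop :=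
  forall v : 'I_d -> C, vnorm (fun a => \sum_(b < d) A a b * v b) <= t * vnorm v.

(* basis index of Q^{(x) n}, Q of dimension d *)
Definition tidx (n d : nat) := {ffun 'I_n -> 'I_d}.

Definition density (n d : nat) (rho : tidx n d -> tidx n d -> C) : Prop :=
  psd rho /\ \sum_(x : tidx n d) rho x x = 1.

Definition povm_el (d : nat) (Pi : 'M[C]_d) (b : bool) : 'M[C]_d :=
  if b then Pi else 1%:M - Pi.

(* Born probability of the joint outcome: s = set of sites with first outcome;
   Tr(rho (E_1 (x) ... (x) E_n)) *)
Definition outcome_prob (n d : nat) (rho : tidx n d -> tidx n d -> C)
    (P : 'I_n -> 'M[C]_d) (s : {set 'I_n}) : C :=
  \sum_(x : tidx n d) \sum_(y : tidx n d)
     rho x y * \prod_(i < n) povm_el (P i) (i \in s) (y i) (x i).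

(* Pr( A (N_P) ) where N_P is the number of first outcomes *)
Definition probN (n d : nat) (rho : tidx n d -> tidx n d -> C)
    (P : 'I_n -> 'M[C]_d) (A : nat -> bool) : C :=
  \sum_(s : {set 'I_n} | A #|s|) outcome_prob rho P s.

Definition binom_tail (n : nat) (delta t : C) : C :=
  \sum_(i < n.+1 | n%:R * t <= i%:R)
     'C(n, i)%:R * delta ^+ i * (1 - delta) ^+ (n - i).

End Quantum.

(* Main.v *)
Require Import Defs.
From HB Require Import structures.
From mathcomp Require Import all_boot all_order all_algebra.
From mathcomp Require Import ring.
Import Order.TTheory GRing.Theory Num.Theory.
Local Open Scope ring_scope.
Set Implicit Arguments. Unset Strict Implicit. Unset Printing Implicit Defensive.
Section S_a.
Variable C : numClosedFieldType.

Definition qf (I : finType) (A : I -> I -> C) (v : I -> C) :=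
  \sum_(a : I) \sum_(b : I) (v a)^* * A a b * v b.

Lemma sum_delta_r (I : finType) (f : I -> C) a :
  \sum_b f b * (b == a)%:R = f a.
Proof.
rewrite (bigD1 a) //= eqxx mulr1 big1 ?addr0 // => b /negbTE ->; by rewrite mulr0.
Qed.

Lemma qfE (I : finType) (A : I -> I -> C) v :
  qf A v = \sum_a (v a)^* * \sum_b A a b * v b.
Proof. apply: eq_bigr => a _; rewrite mulr_sumr; apply: eq_bigr => b _; by rewrite mulrA. Qed.

Lemma qf2 (I : finType) (A : I -> I -> C) a b (x y : C) :
  qf A (fun c => x * (c == a)%:R + y * (c == b)%:R) =
  x^* * x * A a a + x^* * y * A a b + y^* * x * A b a + y^* * y * A b b.
Proof.
rewrite qfE.
under eq_bigr => a' _.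
  under eq_bigr => b' _ do rewrite mulrDr !mulrA.
  rewrite big_split /= !sum_delta_r rmorphD /= !rmorphM /= !rmorph_nat.
  rewrite mulrDl.
  over.
rewrite big_split /=.
under eq_bigr => a' _ do rewrite mulrC mulrA.
under [X in _ + X]eq_bigr => a' _ do rewrite mulrC mulrA.
rewrite !sum_delta_r. ring.
Qed.

Lemma psd_herm (I : finType) (A : I -> I -> C) : psd A -> forall a b, A b a = (A a b)^*.
Proof.
move=> H a b.
have hq : forall x y, (qf A (fun c => x * (c == a)%:R + y * (c == b)%:R))^* =
   qf A (fun c => x * (c == a)%:R + y * (c == b)%:R).
  by move=> x y; apply: geC0_conj; apply: H.
have h1 := hq 1 0; have h2 := hq 0 1; have h3 := hq 1 1; have h4 := hq 1 'i.
rewrite !qf2 !rmorphD /= !rmorphM /= ?conjCi ?rmorph1 ?rmorph0 ?conjCK in h1 h2 h3 h4.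
have ci : (- 'i : C)^* = 'i by rewrite rmorphN /= conjCi opprK.
rewrite ci in h4.
move: h1 h2 h3 h4.
rewrite !(mul0r, mulr0, mul1r, mulr1, addr0, add0r).
move=> h1 h2 h3 h4.
rewrite h1 h2 in h3 h4.
set z := A a b in h3 h4 *; set w := A b a in h3 h4 *.
set X := A a a in h3 h4; set Y := A b b in h3 h4.
have e : (w^* - z) *+ 2 = 0.
  have -> : (w^* - z) *+ 2 = 
     ((X + z^* + w^* + Y) - (X + z + w + Y))
     - 'i * ((X + - 'i * z^* + 'i * w^* + 'i * - 'i * Y) -
        (X + 'i * z + - 'i * w + - 'i * 'i * Y))
     + (1 + 'i ^+ 2) * (- z^* + w^* - z + w).
    ring.
  by rewrite sqrCi addrN mul0r addr0 h3 h4 !subrr mulr0 subr0.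
move/eqP: e; rewrite -mulr_natr mulf_eq0 pnatr_eq0 orbF subr_eq0 => /eqP <-.
by rewrite conjCK.
Qed.
End S_a.

Set Implicit Arguments. Unset Strict Implicit. Unset Printing Implicit Defensive.
Section S_c.
Variable C : numClosedFieldType.
Local Open Scope sesquilinear_scope.

Definition mxA d (A : 'I_d -> 'I_d -> C) : 'M[C]_d := \matrix_(a, b) A a b.

Lemma qf_mx d (A : 'I_d -> 'I_d -> C) v :
  qf A v = ((\row_a (v a)^*) *m mxA A *m (\col_b v b)) 0 0.
Proof.
rewrite /qf !mxE exchange_big /=; apply: eq_bigr => b _.
rewrite !mxE mulr_suml; apply: eq_bigr => a _; by rewrite !mxE.
Qed.

Definition decmp d (A : 'I_d -> 'I_d -> C) (k a : 'I_d) : C :=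
  sqrtC (spectral_diag (mxA A) 0 k) * (spectralmx (mxA A) k a)^*.

Arguments decmp : simpl never.
Lemma decmp_spec d (A : 'I_d -> 'I_d -> C) : psd A ->
  forall a b, A a b = \sum_k decmp A k a * (decmp A k b)^*.
Proof.
move=> hA.
have hh := psd_herm hA.
set M := mxA A.
have hM : M ^t* = M.
  by apply/matrixP => a b; rewrite !mxE -hh.
have nM : M \is normalmx by apply/normalmxP; rewrite hM.
have /orthomx_spectralP hsp := nM.
set P := spectralmx M in hsp *.
set sp := spectral_diag M in hsp *.
have uP : P \is unitarymx by apply: spectral_unitarymx.
rewrite invmx_unitary // in hsp.
have PP : P *m P ^t* = 1%:M by apply/unitarymxP.
have entry : forall a b, A a b = \sum_j (P j a)^* * sp 0 j * P j b.
  move=> a b; have -> : A a b = M a b by rewrite mxE.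
  rewrite hsp mul_mx_diag !mxE; apply: eq_bigr => j _; by rewrite !mxE.
have lam : forall j, 0 <= sp 0 j.
  move=> j; have := hA (fun b => (P j b)^*).
  rewrite -/(qf A _) qf_mx.
  have -> : \row_a ((P j a)^*)^* = row j P.
    by apply/rowP => a; rewrite !mxE conjCK.
  have -> : \col_b (P j b)^* = P ^t* *m delta_mx j 0.
    rewrite -colE; apply/colP => b; by rewrite !mxE.
  rewrite rowE -/M hsp !mulmxA.
  rewrite -(mulmxA (delta_mx 0 j)) PP mulmx1.
  rewrite -(mulmxA _ P) PP mulmx1.
  by rewrite -rowE -colE !mxE eqxx mulr1n.
move=> a b; rewrite entry; apply: eq_bigr => k _.
rewrite /decmp rmorphM /= conjCK (geC0_conj (_ : 0 <= sqrtC (sp 0 k))); last by rewrite sqrtC_ge0.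
have sq := sqrtCK (sp 0 k).
rewrite -/M -/P -/sp.
rewrite expr2 in sq.
rewrite -[in LHS]sq. ring.
Qed.
End S_c.

Set Implicit Arguments. Unset Strict Implicit. Unset Printing Implicit Defensive.
Section S_d.
Variable C : numClosedFieldType.
Variables (n d : nat) (rho : tidx n d -> tidx n d -> C).

Definition Gf (E : 'I_n -> 'I_d -> 'I_d -> C) :=
  \sum_(x : tidx n d) \sum_(y : tidx n d) rho x y * \prod_(i < n) E i (y i) (x i).

Lemma Gf_ext E E' : (forall i a b, E i a b = E' i a b) -> Gf E = Gf E'.
Proof.
move=> h; apply: eq_bigr => x _; apply: eq_bigr => y _; congr (_ * _).
by apply: eq_bigr => i _; rewrite h.
Qed.

Lemma Gf_ge0 E : psd rho -> (forall i, psd (E i)) -> 0 <= Gf E.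
Proof.
move=> hr hE.
have hdec i a b := decmp_spec (hE i) a b.
rewrite /Gf.
under eq_bigr => x _ do under eq_bigr => y _ do
  rewrite (eq_bigr _ (fun i _ => hdec i (y i) (x i))) bigA_distr_bigA mulr_sumr.
under eq_bigr => x _ do rewrite exchange_big.
rewrite exchange_big /=.
apply: sumr_ge0 => K _.
apply: (le_trans (hr (fun x => \prod_i decmp (E i) (K i) (x i)))).
rewrite le_eqVlt; apply/orP; left; apply/eqP.
apply: eq_bigr => x _; apply: eq_bigr => y _.
rewrite [in RHS]big_split [in LHS]rmorph_prod /=. ring.
Qed.

Lemma Gf_expand (T : finType) (F : 'I_n -> T -> 'I_d -> 'I_d -> C)
    (Q : 'I_n -> pred T) :
  Gf (fun i a b => \sum_(t | Q i t) F i t a b) =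
  \sum_(w in family Q) Gf (fun i => F i (w i)).
Proof.
rewrite /Gf.
under eq_bigr => x _ do under eq_bigr => y _ do
  rewrite bigA_distr_big_dep mulr_sumr big_mkcond.
under eq_bigr => x _ do rewrite exchange_big.
rewrite exchange_big [RHS]big_mkcond; apply: eq_bigr => w _.
case: ifP => _ //=; by rewrite big1 // => x _; rewrite big1.
Qed.

Lemma fam_key (T : finType) (S : pred T) (s : {set 'I_n}) (w : {ffun 'I_n -> T}) :
  (w \in family (fun i => [pred t | S t == (i \in s)])) = (s == [set i | S (w i)]).
Proof.
apply/familyP/eqP => [h | ->].
  by apply/setP => i; rewrite inE; have := h i; rewrite inE => /eqP ->.
by move=> i; rewrite !inE.
Qed.

Lemma probN_expand (T : finType) (P : 'I_n -> 'M[C]_d)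
    (F : 'I_n -> T -> 'I_d -> 'I_d -> C) (S : pred T) (A : nat -> bool) :
  (forall i b a a', povm_el (P i) b a a' = \sum_(t | S t == b) F i t a a') ->
  probN rho P A =
  \sum_(w : {ffun 'I_n -> T} | A #|[set i | S (w i)]|) Gf (fun i => F i (w i)).
Proof.
move=> hP; rewrite /probN.
have eo : forall s, outcome_prob rho P s =
    \sum_(w in family (fun i => [pred t | S t == (i \in s)])) Gf (fun i => F i (w i)).
  move=> s; rewrite -Gf_expand; apply: (Gf_ext (E := fun i a b => povm_el (P i) (i \in s) a b)).
  by move=> i a b; rewrite hP.
under eq_bigr => s _ do rewrite eo.
rewrite (exchange_big_dep xpredT) //= [RHS]big_mkcond; apply: eq_bigr => w _.
case hA : (A #|[set i | S (w i)]|).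
  rewrite (big_pred1 [set i | S (w i)]) // => s /=; rewrite fam_key.
  by case: eqP => [->|]; rewrite ?hA ?andbF ?andbT.
rewrite big_pred0 // => s; rewrite fam_key.
by case: eqP => [->|]; rewrite ?hA ?andbF.
Qed.

Lemma povm_scalar (dl : C) b (a a' : 'I_d) :
  povm_el (dl%:M : 'M[C]_d) b a a' = (if b then dl else 1 - dl) *+ (a == a').
Proof. by case: b; rewrite /povm_el !mxE //; case: (a == a'); rewrite ?subrr. Qed.

Lemma outcome_scalar (dl : C) s : \sum_x rho x x = 1 ->
  outcome_prob rho (fun _ => dl%:M) s = dl ^+ #|s| * (1 - dl) ^+ (n - #|s|).
Proof.
move=> htr; rewrite /outcome_prob.
set c := fun i : 'I_n => if i \in s then dl else 1 - dl.
have hp : forall x y : tidx n d,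
    \prod_i povm_el (dl%:M : 'M[C]_d) (i \in s) (y i) (x i) = (\prod_i c i) *+ (y == x).
  move=> x y; rewrite (eq_bigr _ (fun i _ => povm_scalar _ _ _ _)).
  case: (eqVneq y x) => [->|neq].
    by rewrite mulr1n; apply: eq_bigr => i _; rewrite eqxx mulr1n.
  have : ~~ [forall i, y i == x i].
    by apply: contra neq => /forallP h; apply/eqP/ffunP => i; apply/eqP.
  rewrite negb_forall => /existsP [i hi].
  by rewrite (bigD1 i) //= (negbTE hi) mulr0n mul0r mulr0n.
under eq_bigr => x _ do under eq_bigr => y _ do rewrite hp.
have hx : forall x : tidx n d,
    \sum_y rho x y * ((\prod_i c i) *+ (y == x)) = rho x x * \prod_i c i.
  move=> x; rewrite (bigD1 x) // eqxx (mulr1n (\prod_i c i)) (@big1 C 0 +%R) /= ?addr0 //.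
  by move=> y /negbTE ->; rewrite mulr0n mulr0.
under eq_bigr => x _ do rewrite hx.
rewrite -mulr_suml htr mul1r /c.
rewrite (bigID (mem s)) /=.
rewrite (eq_bigr (fun _ => dl)); last by move=> i ->.
rewrite [X in _ * X](eq_bigr (fun _ => 1 - dl)); last by move=> i /negbTE ->.
rewrite (eq_bigl (mem s)) // prodr_const.
rewrite (eq_bigl [predC s]) // prodr_const.
have -> : #|(fun i : 'I_n => i \notin s)| = (n - #|s|)%N.
  have h := cardC (mem s); rewrite card_ord in h; apply/eqP; rewrite -(eqn_add2l #|s|) subnKC ?h //; by rewrite -[X in (_ <= X)%N]h leq_addr.
done.
Qed.

Lemma probN_scalar (dl : C) (A : nat -> bool) : \sum_x rho x x = 1 ->
  probN rho (fun _ => dl%:M) A =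
  \sum_(i < n.+1 | A i) 'C(n, i)%:R * dl ^+ i * (1 - dl) ^+ (n - i).
Proof.
move=> htr; rewrite /probN.
under eq_bigr => s _ do rewrite outcome_scalar //.
have cs : forall s : {set 'I_n}, (#|s| < n.+1)%N.
  by move=> s; rewrite ltnS (leq_trans (max_card _)) ?card_ord.
rewrite (partition_big (fun s : {set 'I_n} => inord #|s| : 'I_n.+1) (fun i : 'I_n.+1 => A i)) /=;
  last by move=> s hs; rewrite inordK.
apply: eq_bigr => i hi.
rewrite (eq_bigl (fun s => s \in [set s : {set 'I_n} | #|s| == i])); last first.
  move=> s; rewrite inE -(inj_eq val_inj) /= inordK //.
  by case: eqP => [->|]; rewrite ?hi ?andbF.
rewrite (eq_bigr (fun _ => dl ^+ i * (1 - dl) ^+ (n - i))); last first.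
  by move=> s; rewrite inE => /eqP ->.
by rewrite sumr_const card_draws card_ord -[in LHS]mulr_natl mulrA.
Qed.
End S_d.

Set Implicit Arguments. Unset Strict Implicit. Unset Printing Implicit Defensive.
Section S_e.
Variable C : numClosedFieldType.

Lemma sq_sum_ge0 d (v : 'I_d -> C) : 0 <= \sum_a `|v a| ^+ 2.
Proof. by apply: sumr_ge0 => a _; rewrite exprn_ge0. Qed.

Lemma dot_row d (u v : 'I_d -> C) :
  dotmx (\row_a u a) (\row_a v a) = \sum_a u a * (v a)^*.
Proof. by rewrite dotmxE mxE; apply: eq_bigr => j _; rewrite !mxE. Qed.

Lemma vnormE d (v : 'I_d -> C) : vnorm v = sqrtC (dotmx (\row_a v a) (\row_a v a)).
Proof. by rewrite /vnorm dot_row; congr sqrtC; apply: eq_bigr => a _; rewrite normCK. Qed.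

Lemma psd_opnorm d (D : 'M[C]_d) (dl : C) :
  psd (fun a b => D a b) -> opnorm_le D dl ->
  psd (fun a b => (dl%:M : 'M[C]_d) a b - D a b).
Proof.
move=> hD hn v.
have e : qf (fun a b => (dl%:M : 'M[C]_d) a b - D a b) v =
         dl * \sum_a `|v a| ^+ 2 - qf (fun a b => D a b) v.
  rewrite /qf mulr_sumr -sumrB; apply: eq_bigr => a _.
  under eq_bigr => b _ do rewrite mulrBr mulrBl.
  rewrite sumrB; congr (_ - _).
  rewrite (bigD1 a) //= !mxE eqxx mulr1n big1 ?addr0; last first.
    by move=> b /negbTE hb; rewrite !mxE eq_sym hb mulr0n mulr0 mul0r.
  rewrite normCK; ring.
rewrite -/(qf _ v) e subr_ge0.
have q0 : 0 <= qf (fun a b => D a b) v := hD v.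
set w := fun a => \sum_b D a b * v b.
have qw : qf (fun a b => D a b) v = dotmx (\row_a w a) (\row_a v a).
  by rewrite qfE dot_row; apply: eq_bigr => a _; rewrite mulrC.
rewrite -(ger0_norm q0) qw.
apply: (le_trans (CauchySchwarz_sqrt (@dotmx C d) (\row_a w a) (\row_a v a)).1).
rewrite -!vnormE.
have vv : vnorm v * vnorm v = \sum_a `|v a| ^+ 2.
  by rewrite -expr2 sqrtCK.
rewrite -vv mulrA ler_wpM2r //; first by rewrite sqrtC_ge0 sq_sum_ge0.
exact: hn.
Qed.
End S_e.

Set Implicit Arguments. Unset Strict Implicit. Unset Printing Implicit Defensive.
Section S_f.
Variable C : numClosedFieldType.

Definition pick3 d (X Y Z : 'M[C]_d) (t : 'I_3) : 'M[C]_d :=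
  if val t == 0%N then X else if val t == 1%N then Y else Z.

Lemma sum3 d (X Y Z : 'M[C]_d) (S : pred 'I_3) b a a' :
  \sum_(t | S t == b) pick3 X Y Z t a a' =
  (if S ord0 == b then X a a' else 0) +
  (if S (lift ord0 ord0) == b then Y a a' else 0) +
  (if S (lift ord0 (lift ord0 ord0)) == b then Z a a' else 0).
Proof. rewrite big_mkcond !big_ord_recl big_ord0 /= /pick3 /=. ring. Qed.

Lemma psd_ext (I : finType) (A B : I -> I -> C) :
  psd A -> (forall a b, A a b = B a b) -> psd B.
Proof.
move=> h e v; have := h v.
by under eq_bigr => a _ do under eq_bigr => b _ do rewrite e.
Qed.

Lemma sum_mono (T : finType) (p q : pred T) (f : T -> C) :
  (forall w, p w -> q w) -> (forall w, 0 <= f w) ->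
  \sum_(w | p w) f w <= \sum_(w | q w) f w.
Proof.
move=> hpq hf; rewrite [X in X <= _]big_mkcond [X in _ <= X]big_mkcond.
apply: ler_sum => w _; case: (boolP (p w)) => hp; first by rewrite (hpq _ hp).
by case: (q w).
Qed.

Lemma sum_union (T : finType) (r p q : pred T) (f : T -> C) :
  (forall w, r w -> p w || q w) -> (forall w, 0 <= f w) ->
  \sum_(w | r w) f w <= \sum_(w | p w) f w + \sum_(w | q w) f w.
Proof.
move=> h hf; rewrite !(big_mkcond _ f) -big_split /=.
apply: ler_sum => w _; case: (boolP (r w)) => hr; last first.
  by apply: addr_ge0; case: ifP.
move: (h _ hr); case: (p w); case: (q w) => //= _.
- by rewrite lerDl.
- by rewrite addr0.
- by rewrite add0r.
Qed.

Lemma zero_opnorm d (t : C) : 0 <= t -> opnorm_le (0 : 'M[C]_d) t.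
Proof.
move=> ht v; rewrite /vnorm big1 ?sqrtC0.
  by rewrite mulr_ge0 // sqrtC_ge0 sq_sum_ge0.
by move=> a _; rewrite big1 ?normr0 ?expr0n // => b _; rewrite mxE mul0r.
Qed.

End S_f.

Unset Implicit Arguments. Set Strict Implicit. Set Printing Implicit Defensive.
Theorem lemma10 (C : numClosedFieldType) (n d : nat)
    (rho : tidx n d -> tidx n d -> C)
    (P P' Pt : 'I_n -> 'M[C]_d) (delta c e : C) :
  (0 < n)%N ->
  0 <= delta -> delta <= 1 ->
  c \is Num.real -> e \is Num.real ->
  density rho ->
  (forall i, effect (P i)) -> (forall i, effect (P' i)) ->
  (forall i, effect (Pt i)) ->
  (forall i, loewner_le (P i) (Pt i)) ->
  (forall i, loewner_le (P' i) (Pt i)) ->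
  (forall i, opnorm_le (Pt i - P i) delta) ->
  probN rho P' (fun k => e + delta + c <= k%:R / n%:R)
    <= probN rho P (fun k => e <= k%:R / n%:R) + binom_tail n delta (delta + c).
Proof.
move=> n0 d0 d1 cR eR [hrho htr] eP eP' ePt lP lP' hop.
have nR : 0 < (n%:R : C) by rewrite ltr0n.
set A1 := fun k : nat => e + delta + c <= k%:R / n%:R.
set Ae := fun k : nat => e <= k%:R / n%:R.
set Ad := fun k : nat => delta + c <= k%:R / n%:R.
have monoA : forall (t : C) (k1 k2 : nat), (k1 <= k2)%N ->
    t <= k1%:R / n%:R -> t <= k2%:R / n%:R.
  move=> t k1 k2 hk h; apply: (le_trans h); rewrite ler_pM2r ?invr_gt0 //.
  by rewrite ler_nat.
set D := fun i => Pt i - P i.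
have psdP : forall i, psd (fun a b => P i a b).
  move=> i; apply: (psd_ext (A := fun a b => P i a b - (0 : 'M[C]_d) a b)); first exact: (eP i).1.
  by move=> a b; rewrite mxE subr0.
have psdP' : forall i, psd (fun a b => P' i a b).
  move=> i; apply: (psd_ext (A := fun a b => P' i a b - (0 : 'M[C]_d) a b)); first exact: (eP' i).1.
  by move=> a b; rewrite mxE subr0.
have psdR : forall i, psd (fun a b => (1%:M - Pt i) a b).
  move=> i; apply: (psd_ext (A := fun a b => (1%:M : 'M[C]_d) a b - Pt i a b)); first exact: (ePt i).2.
  by move=> a b; rewrite !mxE.
have psdD : forall i, psd (fun a b => D i a b).
  move=> i; apply: (psd_ext (A := fun a b => Pt i a b - P i a b)); first exact: lP.
  by move=> a b; rewrite !mxE.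
have psdD' : forall i, psd (fun a b => (Pt i - P' i) a b).
  move=> i; apply: (psd_ext (A := fun a b => Pt i a b - P' i a b)); first exact: lP'.
  by move=> a b; rewrite !mxE.
have psdDD : forall i, psd (fun a b => (delta%:M - D i) a b).
  move=> i; apply: psd_ext (psd_opnorm (psdD i) (hop i)) _ => a b.
  by rewrite /D !mxE.
have psdS : psd (fun a b => ((1 - delta)%:M : 'M[C]_d) a b).
  apply: (psd_ext (A := fun a b => ((1 - delta)%:M : 'M[C]_d) a b - (0 : 'M[C]_d) a b)).
    apply: psd_opnorm; last by apply: zero_opnorm; rewrite subr_ge0.
    by move=> v; rewrite big1 // => a _; rewrite big1 // => b _; rewrite mxE mulr0 mul0r.
  by move=> a b; rewrite [(0 : 'M[C]_d) a b]mxE subr0.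
set S0 := fun t : 'I_3 => val t == 0%N.
set S1 := fun t : 'I_3 => val t == 1%N.
set S01 := fun t : 'I_3 => (val t < 2)%N.
set FF := fun (i : 'I_n) (t : 'I_3) (a b : 'I_d) => pick3 (P i) (D i) (1%:M - Pt i) t a b.
set FF' := fun (i : 'I_n) (t : 'I_3) (a b : 'I_d) => pick3 (P' i) (Pt i - P' i) (1%:M - Pt i) t a b.
set HH := fun (i : 'I_n) (t : 'I_3) (a b : 'I_d) =>
   pick3 (D i) (delta%:M - D i) ((1 - delta)%:M) t a b.
have posF : forall w : {ffun 'I_n -> 'I_3}, 0 <= Gf rho (fun i => FF i (w i)).
  move=> w; apply: Gf_ge0 => // i; rewrite /FF /pick3.
  by case: (w i) => [[|[|[|?]]] ?] //=.
have posF' : forall w : {ffun 'I_n -> 'I_3}, 0 <= Gf rho (fun i => FF' i (w i)).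
  move=> w; apply: Gf_ge0 => // i; rewrite /FF' /pick3.
  by case: (w i) => [[|[|[|?]]] ?] //=.
have posH : forall w : {ffun 'I_n -> 'I_3}, 0 <= Gf rho (fun i => HH i (w i)).
  move=> w; apply: Gf_ge0 => // i; rewrite /HH /pick3.
  by case: (w i) => [[|[|[|?]]] ?] //=.
have c01 : forall w : {ffun 'I_n -> 'I_3},
    (#|[set i | S0 (w i)]| <= #|[set i | S01 (w i)]|)%N.
  move=> w; apply: subset_leq_card; apply/subsetP => i; rewrite !inE /S0 /S01.
  by move=> /eqP ->.
have cU : forall w : {ffun 'I_n -> 'I_3},
    #|[set i | S01 (w i)]| = (#|[set i | S0 (w i)]| + #|[set i | S1 (w i)]|)%N.
  move=> w.
  have -> : [set i | S01 (w i)] = [set i | S0 (w i)] :|: [set i | S1 (w i)].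
    by apply/setP => i; rewrite !inE /S0 /S1 /S01; case: (w i) => [[|[|[|?]]] ?].
  rewrite cardsU.
  have -> : [set i | S0 (w i)] :&: [set i | S1 (w i)] = set0.
    by apply/setP => i; rewrite !inE /S0 /S1; case: (w i) => [[|[|[|?]]] ?].
  by rewrite cards0 subn0.
have kR : forall k : nat, (k%:R / n%:R : C) \is Num.real.
  by move=> k; apply: ger0_real; rewrite divr_ge0 // ltW.
have dR : delta \is Num.real by apply: ger0_real.
have split : forall k0 k1 : nat, A1 (k0 + k1)%N -> Ae k0 || Ad k1.
  move=> k0 k1 h; apply/orP; rewrite /Ae /Ad.
  case: (boolP (e <= k0%:R / n%:R)) => h0; [by left | right].
  have h0' : k0%:R / n%:R < e by rewrite real_ltNge ?kR.
  rewrite real_leNgt ?rpredD ?kR //; apply/negP => h1.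
  move: h; rewrite /A1 real_leNgt ?rpredD ?kR // => /negP; apply.
  by rewrite natrD mulrDl -addrA; apply: ltrD.
have EP' : probN rho P' A1 =
    \sum_(w : {ffun 'I_n -> 'I_3} | A1 #|[set i | S0 (w i)]|) Gf rho (fun i => FF' i (w i)).
  apply: probN_expand => i b a a'; rewrite /FF' sum3 /S0 /=.
  by case: b; rewrite /povm_el /= ?mxE; ring.
have EPt' : probN rho Pt A1 =
    \sum_(w : {ffun 'I_n -> 'I_3} | A1 #|[set i | S01 (w i)]|) Gf rho (fun i => FF' i (w i)).
  apply: probN_expand => i b a a'; rewrite /FF' sum3 /S01 /=.
  by case: b; rewrite /povm_el /= ?mxE; ring.
have EPt : probN rho Pt A1 =
    \sum_(w : {ffun 'I_n -> 'I_3} | A1 #|[set i | S01 (w i)]|) Gf rho (fun i => FF i (w i)).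
  apply: probN_expand => i b a a'; rewrite /FF sum3 /S01 /=.
  by case: b; rewrite /povm_el /D /= ?mxE; ring.
have EP : probN rho P Ae =
    \sum_(w : {ffun 'I_n -> 'I_3} | Ae #|[set i | S0 (w i)]|) Gf rho (fun i => FF i (w i)).
  apply: probN_expand => i b a a'; rewrite /FF sum3 /S0 /=.
  by case: b; rewrite /povm_el /D /= ?mxE; ring.
have ED : probN rho D Ad =
    \sum_(w : {ffun 'I_n -> 'I_3} | Ad #|[set i | S1 (w i)]|) Gf rho (fun i => FF i (w i)).
  apply: probN_expand => i b a a'; rewrite /FF sum3 /S1 /=.
  by case: b; rewrite /povm_el /D /= ?mxE; ring.
have ED' : probN rho D Ad =
    \sum_(w : {ffun 'I_n -> 'I_3} | Ad #|[set i | S0 (w i)]|) Gf rho (fun i => HH i (w i)).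
  apply: probN_expand => i b a a'; rewrite /HH sum3 /S0 /=.
  by case: b; rewrite /povm_el /D /= ?mxE; ring.
have Edl : probN rho (fun _ => delta%:M) Ad =
    \sum_(w : {ffun 'I_n -> 'I_3} | Ad #|[set i | S01 (w i)]|) Gf rho (fun i => HH i (w i)).
  apply: probN_expand => i b a a'; rewrite /HH sum3 /S01 /=.
  by case: b; rewrite /povm_el /D /= ?mxE; ring.
have step1 : probN rho P' A1 <= probN rho Pt A1.
  rewrite EP' EPt'; apply: sum_mono posF' => w; exact: monoA.
have step2 : probN rho Pt A1 <= probN rho P Ae + probN rho D Ad.
  rewrite EPt EP ED; apply: sum_union posF => w; rewrite cU; exact: split.
have step3 : probN rho D Ad <= probN rho (fun _ => delta%:M) Ad.
  rewrite ED' Edl; apply: sum_mono posH => w; exact: monoA.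
have step4 : probN rho (fun _ => delta%:M) Ad = binom_tail n delta (delta + c).
  rewrite probN_scalar // /binom_tail; apply: eq_bigl => i.
  by rewrite /Ad ler_pdivlMr // mulrC.
apply: (le_trans step1); apply: (le_trans step2); rewrite -step4 lerD2l //.
Qed.
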